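(* Let $A$ be a local commutative ring and $N$ its nilradical. Then $A$ is an fqp-ring if and only if either $A$ is a chain ring, or $A/N$ is a valuation domain and $N$ is an $A/N$-module (i.e. $N^2=0$) which is divisible and torsionfree over $A/N$.
   Context: An $A$-module $V$ is $M$-projective if the natural map $\mathrm{Hom}_A(V,M)\to\mathrm{Hom}_A(V,M/X)$ is surjective for every submodule $X$ of $M$; $V$ is quasi-projective if it is $V$-projective. A ring is an fqp-ring if every finitely generated ideal is quasi-projective. A chain ring is a ring whose ideals are totally ordered by inclusion. *)

(* Defs.v *)
From mathcomp Require Import all_boot all_algebra.
Set Implicit Arguments. Unset Strict Implicit. Unset Printing Implicit Defensive.
Import GRing.Theory.
Local Open Scope ring_scope.

Section Defs.
Variable A : comNzRingType.

Definition ideal (I : A -> Prop) : Prop :=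
  I 0 /\ (forall x y, I x -> I y -> I (x + y)) /\ (forall a x, I x -> I (a * x)).

Definition subset_pred (I J : A -> Prop) : Prop := forall x, I x -> J x.

Definition proper_ideal (I : A -> Prop) : Prop := ideal I /\ ~ I 1.

Definition maximal_ideal (M : A -> Prop) : Prop :=
  proper_ideal M /\
  forall J, proper_ideal J -> subset_pred M J -> subset_pred J M.

Definition local_ring : Prop :=
  exists M, maximal_ideal M /\
    forall M', maximal_ideal M' -> forall x, M' x <-> M x.

Definition fg_ideal (I : A -> Prop) : Prop :=
  exists (n : nat) (g : 'I_n -> A),
    forall x, I x <-> exists c : 'I_n -> A, x = \sum_(i < n) c i * g i.

(* An A-linear map V -> M/X is encoded by a function f : A -> A sending V into
   M that is A-linear modulo X on V (its values mod X); the natural map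
   Hom_A(V,M) -> Hom_A(V,M/X) sends g to g mod X, so surjectivity means every
   such f is congruent mod X (on V) to a genuinely A-linear g : V -> M. *)
Definition M_projective (V M : A -> Prop) : Prop :=
  forall X : A -> Prop, ideal X -> subset_pred X M ->
  forall f : A -> A,
    (forall v, V v -> M (f v)) ->
    (forall v w, V v -> V w -> X (f (v + w) - (f v + f w))) ->
    (forall a v, V v -> X (f (a * v) - a * f v)) ->
    exists g : A -> A,
      (forall v, V v -> M (g v)) /\
      (forall v w, V v -> V w -> g (v + w) = g v + g w) /\
      (forall a v, V v -> g (a * v) = a * g v) /\
      (forall v, V v -> X (g v - f v)).

Definition quasi_projective (V : A -> Prop) : Prop := M_projective V V.

Definition fqp_ring : Prop :=
  forall I, ideal I -> fg_ideal I -> quasi_projective I.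

Definition chain_ring : Prop :=
  forall I J, ideal I -> ideal J -> subset_pred I J \/ subset_pred J I.

Definition nilrad (x : A) : Prop := exists n : nat, x ^+ n = 0.

(* A/N is a valuation domain, written out in A:
   A/N is an integral domain (N prime; note N is proper since A is nontrivial)
   and for all a, b in A/N, a divides b or b divides a. *)
Definition quotient_nilrad_valuation_domain : Prop :=
  (forall a b, nilrad (a * b) -> nilrad a \/ nilrad b) /\
  (forall a b, exists c, nilrad (b - c * a) \/ nilrad (a - c * b)).

Definition nilrad_sq_zero : Prop :=
  forall x y, nilrad x -> nilrad y -> x * y = 0.

Definition nilrad_divisible : Prop :=
  forall r n, ~ nilrad r -> nilrad n -> exists m, nilrad m /\ n = r * m.

Definition nilrad_torsionfree : Prop :=
  forall r n, ~ nilrad r -> nilrad n -> r * n = 0 -> n = 0.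

End Defs.

(* Main.v *)
Require Import Defs.
From mathcomp Require Import all_boot all_algebra.
From mathcomp Require Import boolp classical_sets.
From mathcomp Require Import ring.
From Stdlib Require Import Classical ClassicalEpsilon.
Set Implicit Arguments. Unset Strict Implicit. Unset Printing Implicit Defensive.
Import GRing.Theory.
Local Open Scope ring_scope.

Lemma pideal (A : comNzRingType) (x : A) : ideal (fun z => exists c, z = c * x).
Proof.
split; [exists 0; by rewrite mul0r|split].
- by move=> y z [c ->] [d ->]; exists (c + d); rewrite mulrDl.
- by move=> a y [c ->]; exists (a * c); rewrite mulrA.
Qed.

Lemma ideal0 (A : comNzRingType) (I : A -> Prop) : ideal I -> I 0.
Proof. by case. Qed.
Lemma idealD (A : comNzRingType) (I : A -> Prop) x y : ideal I -> I x -> I y -> I (x + y).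
Proof. by move=> [_ [H _]]; apply: H. Qed.
Lemma idealM (A : comNzRingType) (I : A -> Prop) a x : ideal I -> I x -> I (a * x).
Proof. by move=> [_ [_ H]]; apply: H. Qed.
Lemma idealN (A : comNzRingType) (I : A -> Prop) x : ideal I -> I x -> I (- x).
Proof. by move=> HI Ix; rewrite -mulN1r; apply: idealM. Qed.
Lemma idealB (A : comNzRingType) (I : A -> Prop) x y : ideal I -> I x -> I y -> I (x - y).
Proof. by move=> HI Ix Iy; apply: idealD => //; apply: idealN. Qed.

Lemma ideal_sum (A : comNzRingType) (I : A -> Prop) (T : Type) (s : seq T) (F : T -> A) :
  ideal I -> (forall t, I (F t)) -> I (\sum_(t <- s) F t).
Proof.
move=> HI HF; apply: (big_ind I); [exact: ideal0|move=> *; exact: idealD|by []].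
Qed.

Lemma ideal_sumo (A : comNzRingType) (I : A -> Prop) n (F : 'I_n -> A) :
  ideal I -> (forall t, I (F t)) -> I (\sum_(t < n) F t).
Proof.
move=> HI HF; apply: (big_ind I); [exact: ideal0|move=> *; exact: idealD|by []].
Qed.

Lemma gen_in (A : comNzRingType) (I : A -> Prop) n (g : 'I_n -> A) :
  (forall x, I x <-> exists c : 'I_n -> A, x = \sum_(i < n) c i * g i) -> forall j, I (g j).
Proof.
move=> Hg j; apply/Hg; exists (fun i => (i == j)%:R).
rewrite (bigD1 j) //= eqxx mul1r big1 ?addr0 // => i /negbTE ->; by rewrite mul0r.
Qed.

Lemma principal_qp (A : comNzRingType) (I : A -> Prop) p :
  ideal I -> (forall x, I x <-> exists r, x = r * p) -> quasi_projective I.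
Proof.
move=> HI Hp X HX XI f fI fadd flin.
have Ip : I p by apply/Hp; exists 1; rewrite mul1r.
have [s Hs] := (Hp (f p)).1 (fI _ Ip).
exists (fun v => s * v); split; [|split; [|split]].
- by move=> v Iv; apply: idealM.
- by move=> v w _ _; rewrite mulrDr.
- by move=> a v _; exact: mulrCA.
- move=> v Iv; have [r ->] := (Hp v).1 Iv.
  have := flin r p Ip; rewrite Hs => H.
  have -> : s * (r * p) - f (r * p) = - (f (r * p) - r * (s * p)) by ring.
  exact: idealN.
Qed.

Lemma max_exists (A : comNzRingType) (R : A -> A -> Prop) :
  (forall x y, R x y \/ R y x) -> (forall x y z, R x y -> R y z -> R x z) ->
  forall n (r : 'I_n.+1 -> A), exists j, forall i, R (r i) (r j).
Proof.
move=> Rtot Rtr; have Rr : forall x, R x x by move=> x; case: (Rtot x x).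
elim=> [|n IH] r.
  by exists ord0 => i; rewrite (ord1 i).
have [j Hj] := IH (fun i => r (lift ord0 i)).
case: (Rtot (r ord0) (r (lift ord0 j))) => H.
- exists (lift ord0 j) => i; case: (unliftP ord0 i) => [i'|] ->; [exact: Hj|exact: H].
- exists ord0 => i; case: (unliftP ord0 i) => [i'|] ->; [|exact: Rr].
  exact: Rtr (Hj i') H.
Qed.

Lemma fg_principal_of (A : comNzRingType) (I : A -> Prop) n (g : 'I_n -> A) j :
  ideal I -> (forall x, I x <-> exists c : 'I_n -> A, x = \sum_(i < n) c i * g i) ->
  (forall i, exists c, g i = c * g j) -> forall x, I x <-> exists r, x = r * g j.
Proof.
move=> HI Hg Hj x; split.
- move=> /Hg [c ->].
  refine (@ideal_sumo A (fun z => exists r, z = r * g j) n (fun i => c i * g i) (pideal (g j)) _).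
  move=> i /=; have [d ->] := Hj i; by exists (c i * d); rewrite mulrA.
- move=> [r ->]; apply: idealM => //; exact: gen_in Hg j.
Qed.

Lemma fg0 (A : comNzRingType) (I : A -> Prop) (g : 'I_0 -> A) :
  (forall x, I x <-> exists c : 'I_0 -> A, x = \sum_(i < 0) c i * g i) ->
  forall x, I x <-> exists r, x = r * 0.
Proof.
move=> Hg x; rewrite Hg; split => [[c ->]|[r ->]]; first by exists 0; rewrite big_ord0 mulr0.
by exists (fun _ => 0); rewrite big_ord0 mulr0.
Qed.

Lemma chain_fqp (A : comNzRingType) : chain_ring A -> fqp_ring A.
Proof.
move=> Hch I HI [n [g Hg]].
case: n g Hg => [|n] g Hg; first exact: principal_qp HI (fg0 Hg).
pose R := fun x y : A => exists c, x = c * y.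
have [|x y z [c ->] [d ->]|j Hj] := @max_exists A R _ _ n g.
- move=> x y; case: (Hch _ _ (pideal x) (pideal y)) => H.
  + by left; apply: H; exists 1; rewrite mul1r.
  + by right; apply: H; exists 1; rewrite mul1r.
- by exists (c * d); rewrite mulrA.
exact: principal_qp HI (fg_principal_of HI Hg Hj).
Qed.

Lemma nil_ideal (A : comNzRingType) : nilrad_sq_zero A -> ideal (@nilrad A).
Proof.
move=> S; split; [by exists 1%N; rewrite expr1|split].
- move=> x y Nx Ny; exists 2%N; rewrite expr2 mulrDl !mulrDr [x * x]S // [x * y]S // [y * x]S // [y * y]S //; ring.
- move=> a x Nx; exists 2%N; by rewrite expr2 mulrACA [x * x]S // mulr0.
Qed.

Lemma f_sum (A : comNzRingType) (V X : A -> Prop) (f : A -> A) (T : Type) (s : seq T)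
  (F a : T -> A) : ideal V -> ideal X ->
  (forall v w, V v -> V w -> X (f (v + w) - (f v + f w))) ->
  (forall a v, V v -> X (f (a * v) - a * f v)) ->
  (forall t, V (F t)) ->
  X (f (\sum_(t <- s) a t * F t) - \sum_(t <- s) a t * f (F t)).
Proof.
move=> HV HX fadd flin HF; elim: s => [|t s IH].
  rewrite !big_nil; have := flin 0 0 (ideal0 HV); by rewrite !mul0r subr0.
rewrite !big_cons.
have Vt : V (a t * F t) by apply: idealM.
have Vs : V (\sum_(u <- s) a u * F u) by apply: ideal_sum => // u; apply: idealM.
have E := fadd _ _ Vt Vs; have E2 := flin (a t) _ (HF t).
set S1 := \sum_(u <- s) a u * F u in E Vs IH *.
set S2 := \sum_(u <- s) a u * f (F u) in IH *.
have -> : f (a t * F t + S1) - (a t * f (F t) + S2) =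
  (f (a t * F t + S1) - (f (a t * F t) + f S1)) + (f (a t * F t) - a t * f (F t))
  + (f S1 - S2) by ring.
by apply: idealD => //; apply: idealD.
Qed.

Lemma indep_qp (A : comNzRingType) (I : A -> Prop) n (h : 'I_n -> A) :
  nilrad_sq_zero A -> ideal I ->
  (forall x, I x <-> exists c : 'I_n -> A, x = \sum_(i < n) c i * h i) ->
  (forall i, nilrad (h i)) ->
  (forall c : 'I_n -> A, \sum_(i < n) c i * h i = 0 -> forall i, nilrad (c i)) ->
  quasi_projective I.
Proof.
move=> S HI Hh hN hind X HX XI f fI fadd flin.
have NI := nil_ideal S.
have IN : forall x, I x -> nilrad x.
  move=> x /Hh [c ->]; apply: ideal_sumo => // i; exact: idealM.
have Ih := gen_in Hh.
have key : forall c d : 'I_n -> A, \sum_(i < n) c i * h i = \sum_(i < n) d i * h i ->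
    \sum_(i < n) c i * f (h i) = \sum_(i < n) d i * f (h i).
  move=> c d E; apply/eqP; rewrite -subr_eq0 -sumrB; apply/eqP.
  have E' : \sum_(i < n) (c i - d i) * h i = 0.
    by under eq_bigr do rewrite mulrBl; rewrite sumrB E subrr.
  apply: big1 => i _; rewrite -mulrBl S //; first exact: hind E' i.
  by apply: IN; apply: fI.
pose C := fun v => epsilon (inhabits (fun _ : 'I_n => (0 : A)))
  (fun c : 'I_n -> A => v = \sum_(i < n) c i * h i).
have HC : forall v, I v -> v = \sum_(i < n) C v i * h i.
  move=> v Iv; rewrite /C; apply: (epsilon_spec (inhabits (fun _ : 'I_n => (0 : A)))
  (fun c : 'I_n -> A => v = \sum_(i < n) c i * h i)); exact/Hh.
exists (fun v => \sum_(i < n) C v i * f (h i)); split; [|split; [|split]].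
- move=> v Iv; apply: ideal_sumo => // i; apply: idealM => //; exact: fI.
- move=> v w Iv Iw.
  rewrite -big_split /=.
  under [X in _ = X]eq_bigr do rewrite -mulrDl.
  apply: key; rewrite -HC; last exact: idealD.
  under eq_bigr do rewrite mulrDl.
  by rewrite big_split /= -!HC.
- move=> a v Iv.
  rewrite mulr_sumr; under [X in _ = X]eq_bigr do rewrite mulrA.
  apply: key; rewrite -HC; last exact: idealM.
  under eq_bigr do rewrite -mulrA.
  by rewrite -mulr_sumr -HC.
- move=> v Iv.
  have H := f_sum (index_enum 'I_n) (C v) HI HX fadd flin Ih.
  rewrite -HC // in H.
  rewrite -opprB; exact: idealN.
Qed.

Lemma valR_tot (A : comNzRingType) : quotient_nilrad_valuation_domain A ->
  forall x y : A, (exists d, nilrad (x - d * y)) \/ (exists d, nilrad (y - d * x)).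
Proof.
move=> [_ V] x y; have [c [H|H]] := V y x; [by left; exists c|by right; exists c].
Qed.

Lemma valR_tr (A : comNzRingType) : nilrad_sq_zero A -> forall x y z : A,
  (exists d, nilrad (x - d * y)) -> (exists d, nilrad (y - d * z)) ->
  (exists d, nilrad (x - d * z)).
Proof.
move=> S x y z [d Hd] [e He]; exists (d * e).
have -> : x - d * e * z = (x - d * y) + d * (y - e * z) by ring.
have NI := nil_ideal S; apply: idealD => //; exact: idealM.
Qed.

Lemma drop_induct (A : comNzRingType) :
  quotient_nilrad_valuation_domain A -> nilrad_sq_zero A -> nilrad_torsionfree A ->
  forall n (g : 'I_n -> A) (I : A -> Prop), ideal I ->
  (forall x, I x <-> exists c : 'I_n -> A, x = \sum_(i < n) c i * g i) ->
  (forall i, nilrad (g i)) -> quasi_projective I.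
Proof.
move=> V S T; have NI := nil_ideal S.
elim=> [|n IH] g I HI Hg gN.
  by apply: (indep_qp S HI Hg gN) => c _; case.
have [ind|nind] := classic (forall c : 'I_n.+1 -> A,
   \sum_(i < n.+1) c i * g i = 0 -> forall i, nilrad (c i)).
  exact: (indep_qp S HI Hg gN).
have [c Hc] := not_all_ex_not _ _ nind.
have [c0 Hk] : \sum_(i < n.+1) c i * g i = 0 /\ exists k, ~ nilrad (c k).
  apply: NNPP => H; apply: Hc => H0 i; apply: NNPP => Hi; apply: H; split => //.
  by exists i.
have [k nk] := Hk.
have [j Hj] := @max_exists A _ (valR_tot V) (valR_tr S) n c.
have ncj : ~ nilrad (c j).
  move=> Ncj; apply: nk; have [d Hd] := Hj k.
  have -> : c k = (c k - d * c j) + d * c j by ring.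
  apply: idealD => //; exact: idealM.
pose e := fun i => if i == j then 1 else
   epsilon (inhabits (0 : A)) (fun d => nilrad (c i - d * c j)).
have He : forall i, nilrad (c i - e i * c j).
  move=> i; rewrite /e; case: eqP => [->|_].
    by rewrite mul1r subrr; exact: ideal0.
  apply: (epsilon_spec (inhabits (0 : A)) (fun d => nilrad (c i - d * c j))); exact: Hj.
have Se : \sum_(i < n.+1) e i * g i = 0.
  apply: (T (c j)) => //; first by apply: ideal_sumo => // i; exact: idealM.
  rewrite -[RHS]c0 mulr_sumr; apply/eqP; rewrite -subr_eq0 -sumrB; apply/eqP.
  apply: big1 => i _.
  have -> : c j * (e i * g i) - c i * g i = - ((c i - e i * c j) * g i) by ring.
  by rewrite S ?oppr0.
have ej : e j = 1 by rewrite /e eqxx.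
rewrite (bigD1_ord j) //= ej mul1r in Se.
pose e' := fun i => e (lift j i).
have gj : g j = - \sum_(i < n) e' i * g (lift j i).
  by apply/eqP; rewrite -subr_eq0 opprK Se.
apply: (IH (fun i => g (lift j i)) I HI) => //.
move=> x; rewrite Hg; split.
- move=> [d ->]; rewrite (bigD1_ord j) //= gj.
  exists (fun i => d (lift j i) - d j * e' i).
  rewrite mulrN mulr_sumr addrC -sumrB; apply: eq_bigr => i _; ring.
- move=> [d ->]; exists (fun i => if unlift j i is Some i' then d i' else 0).
  rewrite (bigD1_ord j) //= unlift_none mul0r add0r.
  by apply: eq_bigr => i _; rewrite liftK.
Qed.

Lemma val_fqp (A : comNzRingType) :
  quotient_nilrad_valuation_domain A -> nilrad_sq_zero A ->
  nilrad_divisible A -> nilrad_torsionfree A -> fqp_ring A.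
Proof.
move=> V S D T I HI [n [g Hg]].
have NI := nil_ideal S.
have [allN|nall] := classic (forall i, nilrad (g i)).
  exact: (drop_induct V S T HI Hg allN).
have [k nk] := not_all_ex_not _ _ nall.
revert k nk; case: n g Hg {nall} => [|n] g Hg k nk; first by move: nk; case: k.
have [j Hj] := @max_exists A _ (valR_tot V) (valR_tr S) n g.
have ngj : ~ nilrad (g j).
  move=> Ngj; apply: nk; have [d Hd] := Hj k.
  have -> : g k = (g k - d * g j) + d * g j by ring.
  apply: idealD => //; exact: idealM.
apply: (principal_qp HI (fg_principal_of HI Hg _)) => i.
have [d Hd] := Hj i; have [m [Nm Em]] := D _ _ ngj Hd.
exists (d + m); have -> : g i = (g i - d * g j) + d * g j by ring.
rewrite Em; ring.
Qed.

Definition U (A : comNzRingType) (x : A) := exists y, y * x = 1.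

Lemma lin_eq (A : comNzRingType) (x y p q : A) : p = q -> x - y = p - q -> x = y.
Proof. by move=> ->; rewrite subrr => /eqP; rewrite subr_eq0 => /eqP. Qed.

Lemma lin3 (A : comNzRingType) (x y p1 q1 p2 q2 p3 q3 : A) :
  p1 = q1 -> p2 = q2 -> p3 = q3 -> forall c1 c2 c3,
  x - y = c1 * (p1 - q1) + c2 * (p2 - q2) + c3 * (p3 - q3) -> x = y.
Proof.
by move=> -> -> -> c1 c2 c3; rewrite !subrr !mulr0 !addr0 => /eqP; rewrite subr_eq0 => /eqP.
Qed.

Lemma nonunitD (A : comNzRingType) : (forall x : A, U x \/ U (1 - x)) ->
  forall x y : A, ~ U x -> ~ U y -> ~ U (x + y).
Proof.
move=> P x y nx ny [z Hz]; case: (P (z * x)) => [[w Hw]|[w Hw]].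
- by apply: nx; exists (w * z); rewrite -mulrA.
- apply: ny; exists (w * z); rewrite -mulrA.
  have -> : z * y = 1 - z * x by rewrite -Hz; ring.
  exact: Hw.
Qed.

Lemma ideal2 (A : comNzRingType) (a b : A) : ideal (fun z => exists r s, z = r * a + s * b).
Proof.
split; [by exists 0, 0; rewrite !mul0r addr0|split].
- move=> x y [r [s ->]] [r' [s' ->]]; exists (r + r'), (s + s'); ring.
- move=> c x [r [s ->]]; exists (c * r), (c * s); ring.
Qed.

Lemma fg2 (A : comNzRingType) (a b : A) : fg_ideal (fun z => exists r s, z = r * a + s * b).
Proof.
exists 2%N, (fun i : 'I_2 => if val i == 0%N then a else b) => x; split.
- move=> [r [s ->]]; exists (fun i : 'I_2 => if val i == 0%N then r else s).
  by rewrite !big_ord_recl big_ord0 /= addr0.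
- move=> [c ->]; exists (c ord0), (c (lift ord0 ord0)).
  by rewrite !big_ord_recl big_ord0 /= addr0.
Qed.

Section Eps.
Lemma eps2 (A : comNzRingType) (a b : A) :
  exists R : A -> A, forall v, (exists r s, v = r * a + s * b) -> exists s, v = R v * a + s * b.
Proof.
exists (fun v => epsilon (inhabits (0 : A)) (fun r => exists s, v = r * a + s * b)).
move=> v [r Hr]; apply: (epsilon_spec (inhabits (0 : A)) (fun r => exists s, v = r * a + s * b)).
by exists r.
Qed.
End Eps.

Lemma L1 (A : comNzRingType) : (forall x : A, U x \/ U (1 - x)) -> fqp_ring A ->
  forall a b : A, (exists c, a = c * b) \/ (exists c, b = c * a) \/
    (forall z, (exists r, z = r * a) -> (exists s, z = s * b) -> z = 0).
Proof.
move=> P Hf a b.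
set I := fun z => exists r s, z = r * a + s * b.
have QP := Hf I (ideal2 a b) (fg2 a b).
set X := fun z => (exists r, z = r * a) /\ (exists s, z = s * b).
have HX : ideal X.
  split; [split; [exists 0|exists 0]; by rewrite mul0r|split].
  - move=> x y [[r1 ->] [s1 E1]] [[r2 ->] [s2 E2]]; split.
      by exists (r1 + r2); rewrite mulrDl.
    by exists (s1 + s2); rewrite mulrDl E1 E2.
  - move=> c x [[r ->] [s E]]; split; first by exists (c * r); rewrite mulrA.
    by exists (c * s); rewrite E mulrA.
have XI : subset_pred X I by move=> z [[r ->] _]; exists r, 0; rewrite mul0r addr0.
have [R HR] := eps2 a b.
have Ia : I a by exists 1, 0; rewrite mul1r mul0r addr0.
have Ib : I b by exists 0, 1; rewrite mul1r mul0r add0r.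
have fI : forall v, I v -> I (R v * a) by move=> v _; exists (R v), 0; rewrite mul0r addr0.
have fadd : forall v w, I v -> I w -> X (R (v + w) * a - (R v * a + R w * a)).
  move=> v w Iv Iw.
  have [s1 E1] := HR v Iv; have [s2 E2] := HR w Iw.
  have [s3 E3] := HR (v + w) (idealD (ideal2 a b) Iv Iw).
  split; first by exists (R (v + w) - (R v + R w)); ring.
  exists (s1 + s2 - s3).
  have E : R (v + w) * a + s3 * b = (R v * a + s1 * b) + (R w * a + s2 * b)
    by rewrite -E1 -E2 -E3.
  apply: (lin_eq E); ring.
have flin : forall c v, I v -> X (R (c * v) * a - c * (R v * a)).
  move=> c v Iv.
  have [s1 E1] := HR v Iv.
  have [s3 E3] := HR (c * v) (idealM c (ideal2 a b) Iv).
  split; first by exists (R (c * v) - c * R v); ring.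
  exists (c * s1 - s3).
  have E : R (c * v) * a + s3 * b = c * (R v * a + s1 * b) by rewrite -E1 -E3.
  apply: (lin_eq E); ring.
have [g [gI [gadd [glin gX]]]] := QP X HX XI (fun v => R v * a) fI fadd flin.
have [sa Ea] := HR a Ia; have [sb Eb] := HR b Ib.
have [[al Hal] [be Hbe]] := gX a Ia.
have [[ga Hga] [de Hde]] := gX b Ib.
pose k := R a + al.
pose d := 1 - sb + de.
have gaE : g a = k * a by apply: (lin_eq Hal); rewrite /k; ring.
have mu : (1 - k) * a = (sa - be) * b.
  apply: (lin3 (c1:=1) (c2:=1) (c3:=(-1)) Ea Hal Hbe); rewrite /k; ring.
have gbE : g b = d * b.
  apply: (lin3 (c1:=1) (c2:=(-1)) (c3:=0) Hde Eb Hde); rewrite /d; ring.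
have gbE' : g b = (R b + ga) * a by apply: (lin_eq Hga); ring.
have g0 : g 0 = 0 by have := glin 0 a Ia; rewrite !mul0r.
have rel : forall r s, r * a + s * b = 0 -> s * (d - k) * b = 0.
  move=> r s Z.
  have Ira : I (r * a) by apply: idealM => //; exact: ideal2.
  have Isb : I (s * b) by apply: idealM => //; exact: ideal2.
  have H0 : g (r * a + s * b) = r * (k * a) + s * (d * b).
    by rewrite gadd // !glin // gaE gbE.
  rewrite Z g0 in H0.
  apply: (lin3 (c1:=(-1)) (c2:=(- k)) (c3:=0) H0 Z Z); ring.
have [[y Hy]|n1k] := classic (U (1 - k)).
  left; exists (y * (sa - be)).
  by rewrite -mulrA -mu mulrA Hy mul1r.
have [[y Hy]|nd] := classic (U d).
  right; left; exists (y * (R b + ga)).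
  by rewrite -mulrA -gbE' gbE mulrA Hy mul1r.
right; right.
have [[y Hy]|[y Hy]] := P ((1 - k) + d).
  by exfalso; apply: (nonunitD P n1k nd); exists y.
move=> z [r Er] [s Es].
have := rel (- r) s; rewrite mulNr -Er Es addNr => /(_ erefl) Hz.
have -> : s * b = y * (1 - (1 - k + d)) * (s * b) by rewrite Hy mul1r.
have -> : y * (1 - (1 - k + d)) * (s * b) = - (y * (s * (d - k) * b)) by ring.
by rewrite Hz mulr0 oppr0.
Qed.

Lemma F4 (A : comNzRingType) : (forall x : A, U x \/ U (1 - x)) -> fqp_ring A ->
  forall u v : A, (forall z, (exists r, z = r * u) -> (exists s, z = s * v) -> z = 0) ->
  u <> 0 -> forall be, be * u = 0 -> be * v = 0.
Proof.
move=> P Hf u v Z u0 be Hbe.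
set I := fun z => exists r s, z = r * u + s * v.
have QP := Hf I (ideal2 u v) (fg2 u v).
set X := fun z => exists al, al * u = 0 /\ z = al * v.
have HX : ideal X.
  split; [by exists 0; rewrite !mul0r|split].
  - move=> x y [a1 [H1 ->]] [a2 [H2 ->]]; exists (a1 + a2).
    by rewrite !mulrDl H1 H2 addr0.
  - move=> c x [a1 [H1 ->]]; exists (c * a1); by rewrite -!mulrA H1 mulr0.
have XI : subset_pred X I by move=> z [al [_ ->]]; exists 0, al; rewrite mul0r add0r.
have [R HR] := eps2 u v.
have Iu : I u by exists 1, 0; rewrite mul1r mul0r addr0.
have fI : forall w, I w -> I (R w * v) by move=> w _; exists 0, (R w); rewrite mul0r add0r.
have Zr : forall r s, r * u = s * v -> r * u = 0.
  by move=> r s E; apply: Z; [exists r|exists s].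
have fadd : forall w w', I w -> I w' -> X (R (w + w') * v - (R w * v + R w' * v)).
  move=> w w' Iw Iw'.
  have [s1 E1] := HR w Iw; have [s2 E2] := HR w' Iw'.
  have [s3 E3] := HR (w + w') (idealD (ideal2 u v) Iw Iw').
  exists (R (w + w') - (R w + R w')); split; last by ring.
  apply: (Zr _ (s1 + s2 - s3)).
  have E : R (w + w') * u + s3 * v = (R w * u + s1 * v) + (R w' * u + s2 * v)
    by rewrite -E1 -E2 -E3.
  apply: (lin_eq E); ring.
have flin : forall c w, I w -> X (R (c * w) * v - c * (R w * v)).
  move=> c w Iw.
  have [s1 E1] := HR w Iw.
  have [s3 E3] := HR (c * w) (idealM c (ideal2 u v) Iw).
  exists (R (c * w) - c * R w); split; last by ring.
  apply: (Zr _ (c * s1 - s3)).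
  have E : R (c * w) * u + s3 * v = c * (R w * u + s1 * v) by rewrite -E1 -E3.
  apply: (lin_eq E); ring.
have [g [gI [gadd [glin gX]]]] := QP X HX XI (fun w => R w * v) fI fadd flin.
have [su Eu] := HR u Iu.
have [al [Hal Eal]] := gX u Iu.
pose k := R u + al.
have guE : g u = k * v by apply: (lin_eq Eal); rewrite /k; ring.
have ku : (1 - k) * u = 0.
  have H1 : (1 - R u) * u = 0.
    apply: (Zr _ su); apply: (lin_eq Eu); ring.
  by rewrite /k mulrBl mulrDl Hal addr0 -mulrBl H1.
have g0 : g 0 = 0 by have := glin 0 u Iu; rewrite !mul0r.
have H : be * (k * v) = 0 by rewrite -guE -glin // Hbe g0.
case: (P k) => [[y Hy]|[y Hy]].
- rewrite -[v]mul1r -Hy.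
  have -> : be * (y * k * v) = y * (be * (k * v)) by ring.
  by rewrite H mulr0.
- by exfalso; apply: u0; rewrite -[u]mul1r -Hy -mulrA ku mulr0.
Qed.

Definition dv (A : comNzRingType) (a b : A) := exists c, a = c * b.
Definition zi (A : comNzRingType) (a b : A) :=
  forall z, (exists r, z = r * a) -> (exists s, z = s * b) -> z = 0.
Definition inc (A : comNzRingType) (a b : A) := ~ dv a b /\ ~ dv b a.

Lemma nil_sq (A : comNzRingType) (x : A) : x * x = 0 -> nilrad x.
Proof. by move=> H; exists 2%N; rewrite expr2. Qed.

Lemma dv_nil (A : comNzRingType) (x n : A) : dv x n -> nilrad n -> nilrad x.
Proof. by move=> [c ->] [k Hk]; exists k; rewrite exprMn Hk mulr0. Qed.

Lemma structure (A : comNzRingType) :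
  (forall x : A, U x \/ U (1 - x)) ->
  (forall a b : A, dv a b \/ dv b a \/ zi a b) ->
  (forall u v : A, zi u v -> u <> 0 -> forall be, be * u = 0 -> be * v = 0) ->
  ~ chain_ring A ->
  quotient_nilrad_valuation_domain A /\ nilrad_sq_zero A /\
  nilrad_divisible A /\ nilrad_torsionfree A.
Proof.
move=> P L1H F4H nch.
have inc_zi : forall a b : A, inc a b -> zi a b.
  by move=> a b [h1 h2]; case: (L1H a b) => [//|[//|//]].
have inc_sym : forall a b : A, inc a b -> inc b a by move=> a b [h1 h2].
have zi_sym : forall a b : A, zi a b -> zi b a by move=> a b H z h1 h2; exact: H.
have inc0 : forall a b : A, inc a b -> a <> 0.
  by move=> a b [h1 h2] a0; apply: h1; exists 0; rewrite a0 mul0r.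
have incM : forall a b : A, inc a b -> a * b = 0.
  move=> a b /inc_zi H; apply: H; [by exists b; rewrite mulrC|by exists a].
have incS : forall a b : A, inc a b -> a * a = 0.
  move=> a b Hab.
  have Hi : inc a (a + b).
    split.
    - move=> [r Er].
      have E : (1 - r) * a = r * b by rewrite mulrBl mul1r {1}Er; ring.
      have E0 : (1 - r) * a = 0 by apply: (inc_zi _ _ Hab); [exists (1 - r)|exists r].
      case: (P r) => [[y Hy]|[y Hy]].
      + apply: (inc0 _ _ (inc_sym _ _ Hab)).
        by rewrite -[b]mul1r -Hy -mulrA -E E0 mulr0.
      + by apply: (inc0 _ _ Hab); rewrite -[a]mul1r -Hy -mulrA E0 mulr0.
    - move=> [c Ec]; apply: Hab.2; exists (c - 1).
      by rewrite mulrBl -Ec mul1r addrC addKr.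
  by have := incM _ _ Hi; rewrite mulrDr (incM a b Hab) addr0.
have F2a : forall x n : A, ~ nilrad x -> nilrad n -> dv n x.
  move=> x n nx Nn; apply: NNPP => h.
  have [h2|h2] := classic (dv x n); first by apply: nx; exact: dv_nil h2 Nn.
  by apply: nx; apply: nil_sq; apply: (incS x n).
have F2b : forall x y : A, ~ nilrad x -> ~ nilrad y -> dv x y \/ dv y x.
  move=> x y nx ny; apply: NNPP => h; apply: nx; apply: nil_sq; apply: (incS x y).
  by split => H; apply: h; [left|right].
have [u [v Huv]] : exists u v : A, inc u v.
  apply: NNPP => H; apply: nch => I J HI HJ.
  apply: NNPP => H2.
  have [x [Ix nJx]] : exists x, I x /\ ~ J x.
    by apply: NNPP => H3; apply: H2; left => x Ix; apply: NNPP => nJ; apply: H3; exists x.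
  have [y [Jy nIy]] : exists y, J y /\ ~ I y.
    by apply: NNPP => H3; apply: H2; right => y Jy; apply: NNPP => nI; apply: H3; exists y.
  apply: H; exists x, y; split.
  - by move=> [c Ec]; apply: nJx; rewrite Ec; apply: idealM.
  - by move=> [c Ec]; apply: nIy; rewrite Ec; apply: idealM.
have u0 := inc0 _ _ Huv; have v0 := inc0 _ _ (inc_sym _ _ Huv).
have Nu : nilrad u by apply: nil_sq; exact: incS Huv.
have Nv : nilrad v by apply: nil_sq; exact: incS (inc_sym _ _ Huv).
have T1 : forall a b x : A, inc a b -> ~ nilrad x -> x * a <> 0.
  move=> a b x Hab nx xa.
  have Na : nilrad a by apply: nil_sq; exact: incS Hab.
  have [a1 Ea1] := F2a x a nx Na.
  have [[c Ec]|[[c Ec]|Hi]] : dv a1 b \/ dv b a1 \/ inc a1 b.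
  - by apply: NNPP => H; apply H; right; right; split => h; apply: H; [left|right; left].
  - apply: Hab.1; exists (c * x); by rewrite Ea1 Ec; ring.
  - have back : forall e, c = e * x -> False.
      by move=> e Ee; apply: Hab.2; exists e; rewrite Ec Ee Ea1; ring.
    have [Nc|nc] := classic (nilrad c).
      by have [e Ee] := F2a x c nx Nc; exact: back e Ee.
    case: (F2b c x nc nx) => [[e Ee]|[e Ee]]; first exact: back e Ee.
    by apply: Hab.1; exists e; rewrite Ea1 Ee Ec; ring.
  - have xb : x * b = 0 by exact: (F4H a b (inc_zi _ _ Hab) (inc0 _ _ Hab) x xa).
    have xa1 : x * a1 = 0.
      exact: (F4H b a1 (inc_zi _ _ (inc_sym _ _ Hi)) (inc0 _ _ (inc_sym _ _ Hi)) x xb).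
    by apply: (inc0 _ _ Hab); rewrite Ea1 mulrC xa1.
have T : forall x n : A, ~ nilrad x -> nilrad n -> x * n = 0 -> n = 0.
  move=> x n nx Nn xn; apply: NNPP => n0.
  have [Hi|Hc] := classic (inc n u); first exact: T1 _ _ _ Hi nx xn.
  have [Hi|Hc'] := classic (inc n v); first exact: T1 _ _ _ Hi nx xn.
  have cu : dv n u \/ dv u n by apply: NNPP => H; apply: Hc; split => h; apply: H; [left|right].
  have cv : dv n v \/ dv v n by apply: NNPP => H; apply: Hc'; split => h; apply: H; [left|right].
  case: cu => [du|[c Ec]]; last first.
    by apply: (T1 _ _ _ Huv nx); rewrite Ec mulrCA xn mulr0.
  case: cv => [dv'|[c Ec]]; last first.
    by apply: (T1 _ _ _ (inc_sym _ _ Huv) nx); rewrite Ec mulrCA xn mulr0.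
  by apply: n0; apply: (inc_zi _ _ Huv); [case: du => c ->; exists c|case: dv' => c ->; exists c].
have Sq : forall n : A, nilrad n -> n * n = 0.
  move=> n Nn; have [->|n0] := classic (n = 0); first by rewrite mul0r.
  have [[w Hw]|H] := classic (exists w, inc n w); first exact: incS Hw.
  have cmp : forall w, dv n w \/ dv w n.
    by move=> w; apply: NNPP => H2; apply: H; exists w; split => h; apply: H2; [left|right].
  have step : forall k, exists a b, inc a b /\ u = a * n ^+ k /\ v = b * n ^+ k.
    elim=> [|k [a [b [Hab [Eu Ev]]]]]; first by exists u, v; rewrite !expr0 !mulr1.
    case: (cmp a) => [[ha Ea]|[a' Ea]]; case: (cmp b) => [[hb Eb]|[b' Eb]].
    - exfalso; apply: n0; apply: (inc_zi _ _ Hab); [by exists ha|by exists hb].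
    - by exfalso; apply: Hab.2; exists (b' * ha); rewrite Eb Ea mulrA.
    - by exfalso; apply: Hab.1; exists (a' * hb); rewrite Ea Eb mulrA.
    - exists a', b'; split; last by rewrite Eu Ev Ea Eb !exprS !mulrA.
      split => [[c Ec]|[c Ec]].
      + by apply: Hab.1; exists c; rewrite Ea Eb Ec mulrA.
      + by apply: Hab.2; exists c; rewrite Ea Eb Ec mulrA.
  have [K HK] := Nn; have [a [b [_ [Eu _]]]] := step K.
  by exfalso; apply: u0; rewrite Eu HK mulr0.
have Prod : forall n m : A, nilrad n -> nilrad m -> n * m = 0.
  move=> n m Nn Nm.
  have [[c Ec]|[[c Ec]|Hi]] : dv n m \/ dv m n \/ inc n m.
  - by apply: NNPP => H; apply H; right; right; split => h; apply: H; [left|right; left].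
  - by rewrite Ec -mulrA Sq // mulr0.
  - by rewrite Ec mulrCA Sq // mulr0.
  - exact: incM.
have Prime : forall a b : A, nilrad (a * b) -> nilrad a \/ nilrad b.
  move=> a b Nab; apply: NNPP => H.
  have na : ~ nilrad a by move=> h; apply: H; left.
  have nb : ~ nilrad b by move=> h; apply: H; right.
  have Nbu : nilrad (b * u) by apply: nil_sq; rewrite mulrACA [u * u]Sq // mulr0.
  have abu : a * (b * u) = 0 by rewrite mulrA Prod.
  exact: u0 (T b u nb Nu (T a _ na Nbu abu)).
split; [split => //|split; [exact: Prod|split => //]].
- move=> a b.
  have [[c Ec]|[[c Ec]|Hi]] : dv b a \/ dv a b \/ inc a b.
  + by apply: NNPP => H; apply H; right; right; split => h; apply: H; [right; left|left].
  + by exists c; left; rewrite Ec subrr; exists 1%N; rewrite expr1.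
  + by exists c; right; rewrite Ec subrr; exists 1%N; rewrite expr1.
  + exists 0; left; rewrite mul0r subr0; apply: nil_sq; exact: incS (inc_sym _ _ Hi).
- move=> r n nr Nn; have [c Ec] := F2a r n nr Nn.
  exists c; split; last by rewrite Ec mulrC.
  by case: (Prime c r) => //; rewrite -Ec.
Qed.

Lemma local_unit (A : comNzRingType) : local_ring A -> forall x : A, U x \/ U (1 - x).
Proof.
move=> [M [[[HM M1] Mmax] Muniq]].
have key : forall x : A, ~ U x -> M x.
  move=> x nUx.
  pose P := fun J : set A => J = set0 \/ (Defs.proper_ideal J /\ J x).
  have PB : P (fun z => exists c, z = c * x).
    right; split; [split; first exact: pideal|].
    by move=> [c /esym c1]; apply: nUx; exists c.
    by exists 1; rewrite mul1r.
  have [|J [PJ Jmax]] := @Zorn_bigcup A P.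
    move=> F FP Ftot.
    have [ne|e] := classic (exists z, (\bigcup_(X in F) X)%classic z); last first.
      left; apply/seteqP; split => z // Hz; by exfalso; apply: e; exists z.
    have FI : forall J, F J -> forall z, J z -> Defs.proper_ideal J /\ J x.
      move=> J FJ z Jz; case: (FP J FJ) => // J0; by rewrite J0 in Jz.
    case: ne => z [J0 FJ0 J0z]; have [[[I0 _] _] J0x] := FI _ FJ0 _ J0z.
    right; split; [split; [split; [|split]|]|].
    - by exists J0.
    - move=> y w [J1 FJ1 J1y] [J2 FJ2 J2w].
      have [[[_ [a1 _]] _] _] := FI _ FJ1 _ J1y.
      have [[[_ [a2 _]] _] _] := FI _ FJ2 _ J2w.
      case: (Ftot _ _ FJ1 FJ2) => [s12|s21].
      + by exists J2 => //; apply: a2 => //; apply: s12.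
      + by exists J1 => //; apply: a1 => //; apply: s21.
    - move=> a y [J1 FJ1 J1y]; have [[[_ [_ m1]] _] _] := FI _ FJ1 _ J1y.
      by exists J1 => //; apply: m1.
    - move=> [J1 FJ1 J11]; have [[_ n1] _] := FI _ FJ1 _ J11; exact: n1.
    - by exists J0.
  case: PJ => [J0|[PrJ Jx]].
    exfalso; apply: (Jmax _ _ PB); rewrite J0; split => // H.
    have : set0 (0 : A) by apply: H; exists 0; rewrite mul0r.
    by [].
  have mJ : maximal_ideal J.
    split => // K PK JK z Kz.
    apply: NNPP => nJz; apply: (Jmax K); last by right; split => //; apply: JK.
    by split => // KJ; apply: nJz; apply: KJ.
  by apply/(Muniq J mJ).
move=> x; apply: NNPP => H.
have Mx : M x by apply: key => ?; apply: H; left.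
have M1x : M (1 - x) by apply: key => ?; apply: H; right.
apply: M1; have [_ [Ma _]] := HM.
by have := Ma _ _ Mx M1x; rewrite addrC subrK.
Qed.


Theorem theorem4p1 (A : comNzRingType) :
  local_ring A ->
  (fqp_ring A <->
   (chain_ring A \/
    (quotient_nilrad_valuation_domain A /\ nilrad_sq_zero A /\
     nilrad_divisible A /\ nilrad_torsionfree A))).
Proof.
move=> Hl; have P := local_unit Hl; split.
- move=> Hf; have [ch|nch] := classic (chain_ring A); [by left|right].
  apply: structure => //.
  + exact: L1 P Hf.
  + exact: F4 P Hf.
- case => [ch|[V [S [D T]]]]; [exact: chain_fqp|exact: val_fqp].
Qed.
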